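(* Let $K$ be a field of characteristic $\neq 2$, $A\in K[t]$ non-zero, and let $(x,y,z)$ be a fundamental Markoff triple for $A$. (1) If $x\neq 0$, then $A$ and $x$ are constants (elements of $K$). (2) If $x=0$, then $K$ contains a square root $i$ of $-1$, and there exist $f\in K[t]\setminus K$ and $\varepsilon\in\{\pm1\}$ with $y=\varepsilon i f$ and $z=f$.
   Context: For non-zero $A\in K[t]$, solutions are triples $(x,y,z)\in K[t]^3$ with $x^2+y^2+z^2=Axyz$. The degree of the zero polynomial is $-\infty$. The height is $\max\{\deg x,\deg y,\deg z\}$. A Markoff triple is a solution with positive height and $\deg x\le\deg y\le\deg z$; it is fundamental if moreover $\deg y=\deg z$. *)

(* Defs.v *)
From HB Require Import structures.
From mathcomp Require Import all_boot all_order all_algebra.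
Set Implicit Arguments. Unset Strict Implicit. Unset Printing Implicit Defensive.
Import Order.TTheory GRing.Theory Num.Theory.
Local Open Scope ring_scope.

(* Degrees with the convention deg 0 = -oo are encoded via [size]:
   size p = deg p + 1 for p <> 0 and size 0 = 0, so
   deg p <= deg q  <->  size p <= size q, and deg p > 0 <-> size p > 1. *)

Definition markoff_sol (K : fieldType) (A x y z : {poly K}) : Prop :=
  x ^+ 2 + y ^+ 2 + z ^+ 2 = A * x * y * z.

Definition height_pos (K : fieldType) (x y z : {poly K}) : Prop :=
  (1 < maxn (size x) (maxn (size y) (size z)))%N.

Definition markoff_triple (K : fieldType) (A x y z : {poly K}) : Prop :=
  [/\ markoff_sol A x y z, height_pos x y z,
      (size x <= size y)%N & (size y <= size z)%N].

Definition fundamental_markoff (K : fieldType) (A x y z : {poly K}) : Prop :=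
  markoff_triple A x y z /\ size y = size z.

(* Main.v *)
Require Import Defs.
From HB Require Import structures.
From mathcomp Require Import all_boot all_order all_algebra.
From mathcomp Require Import zify ring.
Import Order.TTheory GRing.Theory Num.Theory.
Local Open Scope ring_scope.

Theorem lemma2p2 (K : fieldType) (A x y z : {poly K})
  (hchar : (2%:R : K) != 0) (hA : A != 0)
  (hF : fundamental_markoff A x y z) :
  (x != 0 -> (size A <= 1)%N /\ (size x <= 1)%N) /\
  (x = 0 -> exists i : K, i ^+ 2 = -1 /\
     exists (f : {poly K}) (eps : K),
       (1 < size f)%N /\ (eps = 1 \/ eps = -1) /\
       y = (eps * i)%:P * f /\ z = f).
Proof.
case: hF => [[hE hH hxy hyz] hyz'].
rewrite /height_pos in hH.
have hz2 : (1 < size z)%N by move: hH hxy hyz; lia.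
have z0 : z != 0 by rewrite -size_poly_gt0; lia.
have y0 : y != 0 by rewrite -size_poly_gt0; lia.
split.
- move=> x0.
  have hs := size_polyD (x ^+ 2 + y ^+ 2) (z ^+ 2).
  have hs2 := size_polyD (x ^+ 2) (y ^+ 2).
  have ex : forall p : {poly K}, p != 0 -> size (p ^+ 2) = (size p + size p).-1.
    by move=> p p0; rewrite expr2 size_mul.
  rewrite (ex _ z0) in hs.
  rewrite (ex _ x0) (ex _ y0) in hs2.
  have Ax0 : A * x != 0 by rewrite mulf_neq0.
  have Axy0 : A * x * y != 0 by rewrite mulf_neq0.
  have hR : size (A * x * y * z) = (size A + size x + size y + size z - 3)%N.
    rewrite !size_mul //.
    have sA : (0 < size A)%N by rewrite size_poly_gt0.
    have sx : (0 < size x)%N by rewrite size_poly_gt0.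
    move: sA sx hz2; rewrite hyz'. set a := size A; set b := size x; set c := size z. lia.
  rewrite -hE in hR.
  have sA : (0 < size A)%N by rewrite size_poly_gt0.
  have sx : (0 < size x)%N by rewrite size_poly_gt0.
  move: hs hs2 sA sx hR hz2; rewrite hyz'. set a := size A; set b := size x; set c := size z; set d := size (_ + z ^+ 2); set e := size (x ^+ 2 + _). lia.
- move=> x0; subst x.
  have e : y ^+ 2 + z ^+ 2 = 0.
    by move: hE; rewrite /markoff_sol mulr0 !mul0r expr0n /= add0r.
  have lz : lead_coef z != 0 by rewrite lead_coef_eq0.
  set i := lead_coef y / lead_coef z.
  have hi : i ^+ 2 = -1.
    have : lead_coef (y ^+ 2) = lead_coef (- z ^+ 2).
      by rewrite -(addrK (z ^+ 2) (y ^+ 2)) e sub0r.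
    rewrite lead_coefN !lead_coef_exp => h.
    rewrite /i expr_div_n h mulNr divff // expf_neq0 //.
  exists i; split => //.
  have : (y - i%:P * z) * (y + i%:P * z) = 0.
    have -> : (y - i%:P * z) * (y + i%:P * z) = y ^+ 2 - (i%:P) ^+ 2 * z ^+ 2 by ring.
    by rewrite -rmorphXn /= hi polyCN mulN1r opprK.
  move/eqP; rewrite mulf_eq0 => /orP [/eqP h | /eqP h].
  + exists z, 1; split => //; split; first by left.
    split => //; rewrite mul1r; apply/eqP; by rewrite -subr_eq0 h.
  + exists z, (-1); split => //; split; first by right.
    split => //; rewrite mulN1r polyCN mulNr; apply/eqP.
    by rewrite -addr_eq0 h.
Qed.
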